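(* Let $(P_n)_{n\ge 0}$ be the Padovan sequence and for $1\le b\le 4$ and $m\ge 0$ let $r_m^{(4,b)}=\sum_{k=0}^{m}P_{4k+b}$. Then for every $m\ge 3$, $$r_m^{(4,b)}=2r_{m-1}^{(4,b)}+3r_{m-2}^{(4,b)}+r_{m-3}^{(4,b)}+c_b,$$ where $c_1=2$, $c_2=4$, $c_3=3$, $c_4=6$.
   Context: The Padovan sequence is defined by $P_0=P_1=P_2=1$ and $P_{n+3}=P_{n+1}+P_n$. *)

(* Defs.v *)
From mathcomp Require Import all_boot.
Set Implicit Arguments.
Unset Strict Implicit.
Unset Printing Implicit Defensive.

Fixpoint padovan (n : nat) : nat :=
  match n with
  | 0 | 1 | 2 => 1
  | (k.+1 as j).+2 => padovan j + padovan k
  end.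

Definition r4 (b m : nat) : nat := \sum_(0 <= k < m.+1) padovan (4 * k + b).

Definition cb (b : nat) : nat :=
  match b with 1 => 2 | 2 => 4 | 3 => 3 | 4 => 6 | _ => 0 end.

(* Main.v *)
Require Import Defs.
From mathcomp Require Import all_boot.
From mathcomp Require Import zify.

Lemma padS j : padovan j.+3 = padovan j.+1 + padovan j.
Proof. by []. Qed.

Lemma P12 j : padovan j.+4.+4.+4 = 2 * padovan j.+4.+4 + 3 * padovan j.+4 + padovan j.
Proof. rewrite !padS; lia. Qed.

Lemma rS b m : r4 b m.+1 = r4 b m + padovan (4 * m.+1 + b).
Proof. by rewrite /r4 big_nat_recr. Qed.

Theorem theorem4p4 (b m : nat) : 1 <= b <= 4 -> 3 <= m ->
  r4 b m = 2 * r4 b (m - 1) + 3 * r4 b (m - 2) + r4 b (m - 3) + cb b.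
Proof.
move=> Hb Hm.
have [n ->] : exists n, m = n.+3 by exists (m - 3); lia.
have -> : n.+3 - 1 = n.+2 by lia.
have -> : n.+3 - 2 = n.+1 by lia.
have -> : n.+3 - 3 = n by lia.
elim: n => [|n IH].
  by case: b Hb => [|[|[|[|[|]]]]] //= _; rewrite /r4 !big_nat_recr //= !big_geq.
move: IH; rewrite !(rS b n.+3) !(rS b n.+2) !(rS b n.+1) !(rS b n) => IH.
have := P12 (4 * n.+1 + b).
have -> : (4 * n.+1 + b).+4.+4.+4 = 4 * n.+4 + b by lia.
have -> : (4 * n.+1 + b).+4.+4 = 4 * n.+3 + b by lia.
have -> : (4 * n.+1 + b).+4 = 4 * n.+2 + b by lia.
lia.
Qed.
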